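(* For every integer $D\ge 2$, there exists a 2-degenerate graph $H_D$ with maximum degree $D$ such that $H_D^2$ is not $(3D-5)$-degenerate.
   Context: A graph is $k$-degenerate if every subgraph has a vertex of degree at most $k$. The square $H^2$ is obtained from $H$ by adding an edge between every pair of vertices at distance 2 in $H$. *)

(* Defs.v *)
From mathcomp Require Import all_boot.
Set Implicit Arguments. Unset Strict Implicit. Unset Printing Implicit Defensive.

Definition simple_graph (T : finType) (e : rel T) : Prop :=
  irreflexive e /\ symmetric e.

Definition nbhd_in (T : finType) (e : rel T) (S : {set T}) (v : T) : {set T} :=
  [set u in S | e v u].

Definition deg (T : finType) (e : rel T) (v : T) : nat := #|[set u | e v u]|.

Definition max_degree (T : finType) (e : rel T) : nat := \max_(v : T) deg e v.

Definition degenerate (T : finType) (e : rel T) (k : nat) : Prop :=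
  forall S : {set T}, S != set0 ->
    exists2 v, v \in S & #|nbhd_in e S v| <= k.

Definition square (T : finType) (e : rel T) : rel T :=
  fun x y => (x != y) && (e x y || [exists z, e x z && e z y]).

(* Main.v *)
Require Import Defs.
From mathcomp Require Import all_boot zify.
Set Implicit Arguments. Unset Strict Implicit. Unset Printing Implicit Defensive.

Section Constr.
Variable m : nat.
Local Notation I := 'I_m.+1.
Local Notation T := (bool * bool * I + (bool * I * I + I * I * I))%type.
Local Notation Big s t i := (@inl (bool * bool * I) (bool * I * I + I * I * I) (s, t, i)).
Local Notation Mid s a b := (@inr (bool * bool * I) (bool * I * I + I * I * I) (inl (s, a, b))).
Local Notation Con a b c := (@inr (bool * bool * I) (bool * I * I + I * I * I) (inr (a, b, c))).

Definition E (x y : T) : bool :=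
  match x, y with
  | inl (s, t, i), inl (s', t', i') => (s != s') && (t == t') && (i == i')
  | inl (s, t, i), inr (inl (s', a, b)) => (s == s') && (if t then i == b else i == a)
  | inr (inl (s', a, b)), inl (s, t, i) => (s == s') && (if t then i == b else i == a)
  | inr (inl (s, a, b)), inr (inr (a', b', c')) =>
      (a == a') && (b' != c') && (if s then c' == b else b' == b)
  | inr (inr (a', b', c')), inr (inl (s, a, b)) =>
      (a == a') && (b' != c') && (if s then c' == b else b' == b)
  | _, _ => false
  end.

Lemma E_simple : simple_graph E.
Proof.
split.
  by case=> [[[s t] i]|[[[s a] b]|[[a b] c]]] /=; rewrite ?eqxx.
by case=> [[[s t] i]|[[[s a] b]|[[a b] c]]] [[[s' t'] i']|[[[s' a'] b']|[[a' b'] c']]] //=;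
  rewrite [s == _]eq_sym ?[t == _]eq_sym ?[i == _]eq_sym.
Qed.

Definition is_con (x : T) := if x is inr (inr _) then true else false.
Definition is_mid (x : T) := if x is inr (inl _) then true else false.


Lemma card_big_nb s t i :
  #|[set u | E (Big s t i) u]| <= m.+2.
Proof.
have sub : [set u | E (Big s t i) u] \subset
   Big (~~s) t i |: [set (if t then Mid s j i else Mid s i j) | j : I].
  apply/subsetP => u; rewrite inE.
  case: u => [[[s' t'] i']|[[[s' a] b]|[[a b] c]]] //=.
    case/andP=> /andP[ss /eqP <-] /eqP <-; rewrite in_setU1.
    by move: ss; case: s; case: s' => //= _; apply/orP; left; apply/eqP.
  case/andP=> /eqP <- h; rewrite in_setU1; apply/orP; right; apply/imsetP.
  by case: t h => /eqP <-; [exists a | exists b].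
apply: leq_trans (subset_leq_card sub) _.
rewrite cardsU1 -[m.+2]/(1 + m.+1); apply: leq_add; first by case: (_ \notin _).
by apply: leq_trans (leq_imset_card _ _) _; rewrite card_ord.
Qed.

Lemma card_mid_nb s a b :
  #|[set u | E (Mid s a b) u]| <= m.+2.
Proof.
have sub : [set u | E (Mid s a b) u] \subset
   Big s false a |: (Big s true b |: [set (if s then Con a (lift b k) b else Con a b (lift b k)) | k : 'I_m]).
  apply/subsetP => u; rewrite inE.
  case: u => [[[s' t'] i']|[[[s' a'] b']|[[a' b'] c']]] //=.
    case/andP=> /eqP <- h; rewrite !in_setU1.
    by case: t' h => /eqP ->; rewrite eqxx ?orbT.
  case/andP=> /andP[/eqP <- nbc] h; rewrite !in_setU1 /=.
  apply/imsetP.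
  case: s h nbc => /eqP -> nbc.
    by case: (unliftP b b') nbc => [k ->|->]; rewrite ?eqxx // => _; exists k.
  by case: (unliftP b c') nbc => [k ->|->]; rewrite ?eqxx // => _; exists k.
apply: leq_trans (subset_leq_card sub) _.
rewrite cardsU1 -[m.+2]/(1 + (1 + m)); apply: leq_add; first by case: (_ \notin _).
rewrite cardsU1; apply: leq_add; first by case: (_ \notin _).
by apply: leq_trans (leq_imset_card _ _) _; rewrite card_ord.
Qed.


Lemma card_con_nb a b c : #|[set u | E (Con a b c) u]| <= 2.
Proof.
have sub : [set u | E (Con a b c) u] \subset [set Mid false a b; Mid true a c].
  apply/subsetP => u; rewrite inE.
  case: u => [[[s' t'] i']|[[[s' a'] b']|[[a' b'] c']]] //=.
  case/andP=> /andP[/eqP -> _] h; rewrite !inE.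
  by case: s' h => /eqP ->; rewrite eqxx ?orbT.
apply: leq_trans (subset_leq_card sub) _.
by rewrite cards2; case: (_ != _).
Qed.

Lemma deg_le v : deg E v <= m.+2.
Proof.
rewrite /deg; case: v => [[[s t] i]|[[[s a] b]|[[a b] c]]].
- exact: card_big_nb.
- exact: card_mid_nb.
- exact: leq_trans (card_con_nb a b c) _.
Qed.

Lemma deg_big0 : m.+2 <= deg E (Big false false ord0).
Proof.
pose f (o : option I) : T := if o is Some j then Mid false ord0 j else Big true false ord0.
have finj : injective f by case=> [j|] [j'|] //= [->].
have sub : f @: setT \subset [set u | E (Big false false ord0) u].
  apply/subsetP => u /imsetP [[j|] _ ->]; rewrite inE //=.
rewrite /deg; apply: leq_trans (subset_leq_card sub).
by rewrite card_imset // cardsT card_option card_ord.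
Qed.

Lemma maxdeg : max_degree E = m.+2.
Proof.
apply/eqP; rewrite eqn_leq; apply/andP; split.
  by apply/bigmax_leqP => v _; exact: deg_le.
exact: leq_trans deg_big0 (leq_bigmax _).
Qed.


Lemma degen2 : degenerate E 2.
Proof.
move=> S /set0Pn [x0 x0S].
case: (pickP [pred x | (x \in S) && is_con x]) => [x /andP[xS cx] | nocon].
  exists x => //.
  case: x xS cx => [[[s t] i]|[[[s a] b]|[[a b] c]]] // _ _.
  apply: leq_trans (card_con_nb a b c).
  by apply: subset_leq_card; apply/subsetP => u; rewrite !inE => /andP[].
case: (pickP [pred x | (x \in S) && is_mid x]) => [x /andP[xS mx] | nomid].
  exists x => //.
  case: x xS mx => [[[s t] i]|[[[s a] b]|[[a b] c]]] // xS _.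
  have sub : nbhd_in E S (Mid s a b) \subset [set Big s false a; Big s true b].
    apply/subsetP => u; rewrite !inE => /andP[uS].
    case: u uS => [[[s' t'] i']|[[[s' a'] b']|[[a' b'] c']]] //= uS.
      case/andP=> /eqP <- h; move: h uS.
      by case: t' => /eqP -> _; rewrite eqxx ?orbT.
    by move: (nocon (Con a' b' c')); rewrite /= uS.
  apply: leq_trans (subset_leq_card sub) _.
  by rewrite cards2; case: (_ != _).
exists x0 => //.
case: x0 x0S => [[[s t] i]|[[[s a] b]|[[a b] c]]] xS; last 2 first.
- by move: (nomid (Mid s a b)); rewrite /= xS.
- by move: (nocon (Con a b c)); rewrite /= xS.
have sub : nbhd_in E S (Big s t i) \subset [set Big (~~s) t i].
  apply/subsetP => u; rewrite !inE => /andP[uS].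
  case: u uS => [[[s' t'] i']|[[[s' a'] b']|[[a' b'] c']]] //= uS.
    case/andP=> /andP[ss /eqP <-] /eqP <-.
    by move: ss; clear; case: s; case: s' => //= _; apply/eqP.
  by move: (nomid (Mid s' a' b')); rewrite /= uS.
by apply: leq_trans (subset_leq_card sub) _; rewrite cards1.
Qed.


Definition S0 : {set T} := [set x | ~~ is_con x].

Definition gB (t : bool) (i : I) s' j : T := if t then Mid s' j i else Mid s' i j.
Definition fB s t i (x : I + I + I) : T :=
  match x with inl (inl j) => gB t i s j | inl (inr j) => gB t i (~~s) j | inr j => Big s (~~t) j end.

Lemma sq_big s t i : (3 * m).+2 <= #|nbhd_in (square E) S0 (Big s t i)|.
Proof.
have finj : injective (fB s t i).
  rewrite /fB /gB; case: t => -[[j|j]|j] [[j'|j']|j'] //= [];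
    try (by move=> ->); try (by case: s).
have sub : fB s t i @: setT \subset nbhd_in (square E) S0 (Big s t i).
  clear finj; apply/subsetP => u /imsetP [[[j|j]|j] _ ->]; rewrite !inE /square /=;
    rewrite /fB /gB; case: t => /=.
  - by rewrite !eqxx.
  - by rewrite !eqxx.
  - by apply/orP; right; apply/existsP; exists (Big (~~s) true i) => /=; rewrite !eqxx; case: s.
  - by apply/orP; right; apply/existsP; exists (Big (~~s) false i) => /=; rewrite !eqxx; case: s.
  - apply/andP; split; first by apply/eqP; case.
    by apply/orP; right; apply/existsP; exists (Mid s j i) => /=; rewrite !eqxx.
  - apply/andP; split; first by apply/eqP; case.
    by apply/orP; right; apply/existsP; exists (Mid s i j) => /=; rewrite !eqxx.
apply: leq_trans (subset_leq_card sub).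
by rewrite card_imset // cardsT !card_sum card_ord; lia.
Qed.


Definition fM (s : bool) (a b : I) (x : 'I_m + 'I_m + 'I_m + bool) : T :=
  match x with
  | inl (inl (inl j)) => Mid s a (lift b j)
  | inl (inl (inr j)) => Mid s (lift a j) b
  | inl (inr k) => Mid (~~s) a (lift b k)
  | inr true => Big s false a
  | inr false => Big s true b
  end.

Lemma sq_mid s a b : (3 * m).+2 <= #|nbhd_in (square E) S0 (Mid s a b)|.
Proof.
have finj : injective (fM s a b).
  rewrite /fM => -[[[j|j]|j]|[]] [[[j'|j']|j']|[]] //= [].
  all: try by case: s.
  all: try by move=> /(congr1 (unbump b)); rewrite !bumpK => /val_inj ->.
  all: try by move=> /(congr1 (unbump a)); rewrite !bumpK => /val_inj ->.
  - by move=> h; have := neq_lift a j'; rewrite -h eqxx.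
  - by move=> h; have := neq_lift a j; rewrite h eqxx.
have sub : fM s a b @: setT \subset nbhd_in (square E) S0 (Mid s a b).
  clear finj; apply/subsetP => u /imsetP [[[[j|j]|j]|[]] _ ->]; rewrite !inE /square /=.
  - apply/andP; split; first by apply/eqP => -[] h; have := neq_lift b j; rewrite -h eqxx.
    by apply/existsP; exists (Big s false a) => /=; rewrite !eqxx.
  - apply/andP; split; first by apply/eqP => -[] h; have := neq_lift a j; rewrite -h eqxx.
    by apply/existsP; exists (Big s true b) => /=; rewrite !eqxx.
  - apply/andP; split; first by apply/eqP => -[]; case: s.
    apply/existsP; exists (if s then Con a (lift b j) b else Con a b (lift b j)).
    by case: s => /=; rewrite !eqxx /= ?(eq_sym (lift b j)) neq_lift.
  - by rewrite !eqxx.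
  - by rewrite !eqxx.
apply: leq_trans (subset_leq_card sub).
by rewrite card_imset // cardsT !card_sum card_ord card_bool; lia.
Qed.


Lemma not_degen : ~ degenerate (square E) (3 * m).+1.
Proof.
move=> dg.
have : S0 != set0 by apply/set0Pn; exists (Big false false ord0); rewrite inE.
move/dg => [v]; rewrite inE; case: v => [[[s t] i]|[[[s a] b]|[[a b] c]]] //= _ h.
- by have := sq_big s t i; rewrite ltnNge h.
- by have := sq_mid s a b; rewrite ltnNge h.
Qed.

End Constr.

Theorem mainTheorem11 (D : nat) (hD : 2 <= D) :
  exists (T : finType) (e : rel T),
    [/\ simple_graph e, degenerate e 2, max_degree e = D
      & ~ degenerate (square e) (3 * D - 5)].
Proof.
case: D hD => [|[|m]] // _.
exists _, (@E m); split.
- exact: E_simple.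
- exact: degen2.
- exact: maxdeg.
- have -> : 3 * m.+2 - 5 = (3 * m).+1 by lia.
  exact: not_degen.
Qed.
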